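(* Let $G$ be a finite group with $|G| = mp^k$, where $p$ is a prime, $k \geq 1$, and $m$ is a natural number such that $1 < m/q < p < m$, where $q$ is the smallest prime divisor of $m$. Then $m^*(G) > |G|$, and so $G$ is not Chermak-Delgado simple.
   Context: For $H \leq G$, $m_G(H) = |H|\,|C_G(H)|$; $m^*(G) = \max\{ m_G(H) : H \leq G\}$; $\mathcal{CD}(G) = \{ H \leq G : m_G(H) = m^*(G)\}$. $G$ is Chermak-Delgado simple if $\mathcal{CD}(G) = \{1, G\}$. *)

(* Defs.v *)
From mathcomp Require Import all_boot all_order all_fingroup.
Set Implicit Arguments.
Unset Strict Implicit.
Unset Printing Implicit Defensive.
Local Open Scope group_scope.

Section CD.
Variable gT : finGroupType.

Definition mCD (G H : {set gT}) : nat := (#|H| * #|'C_G(H)|)%N.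

Definition mstar (G : {set gT}) : nat :=
  \max_(H : {group gT} | H \subset G) mCD G H.

Definition CDlattice (G : {set gT}) : {set {group gT}} :=
  [set H : {group gT} | (H \subset G) && (mCD G H == mstar G)].

Definition CD_simple (G : {group gT}) : Prop :=
  CDlattice G = [set 1%G; G].
End CD.

(* Main.v *)
Require Import Defs.
From mathcomp Require Import all_boot all_order all_fingroup all_solvable.
From mathcomp Require vcharacter.
From mathcomp Require Import zify.
Set Implicit Arguments. Unset Strict Implicit. Unset Printing Implicit Defensive.
Local Open Scope group_scope.

Lemma num_big_div m d : (1 < m %/ pdiv m -> d %| m -> m %/ pdiv m < d -> d = m)%N.
Proof.
move=> hs dm sd.
have m0 : (0 < m)%N by case: m hs {dm sd} => //; rewrite div0n.
have d0 : (0 < d)%N by apply: dvdn_gt0 dm.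
have e : (m %/ d * d = m)%N by rewrite divnK.
have qm : (pdiv m * (m %/ pdiv m) = m)%N by rewrite mulnC divnK // pdiv_dvd.
case: (leqP (m %/ d) 1) => h.
  move: e h m0; case: (m %/ d) => [|[|]] //=; lia.
have q_le : (pdiv m <= m %/ d)%N.
  by apply: pdiv_min_dvd => //; apply: dvdn_div.
have h1 : (pdiv m * d <= m)%N by rewrite -{2}e leq_mul2r q_le orbT.
have qpos : (0 < pdiv m)%N by rewrite pdiv_gt0.
move: sd h1 qm qpos; set q := pdiv m; set s := m %/ q. nia.
Qed.

Lemma num_mod1 p m d : (1 < m %/ pdiv m -> m %/ pdiv m < p -> d %| m ->
  d %% p = 1 -> 1 < d -> d = m)%N.
Proof.
move=> hs sp dm dp d1; apply: num_big_div => //.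
have : (p < d)%N.
  rewrite ltnNge; apply/negP => h.
  move: dp; case: (ltngtP d p) => [lt|gt|eq].
  - by rewrite modn_small // => e; rewrite e ltnn in d1.
  - by rewrite ltnNge h in gt.
  - by rewrite eq modnn.
lia.
Qed.

Lemma num_facts p m : (1 < m %/ pdiv m -> m %/ pdiv m < p -> p < m ->
  [/\ pdiv m <= m %/ pdiv m, m < p * p, m < p * pdiv m, pdiv m * (m %/ pdiv m) = m
    & ~~ (p %| m)])%N.
Proof.
move=> hs sp pm.
have m0 : (0 < m)%N by case: m hs {sp pm} => //; rewrite div0n.
have qm : (pdiv m * (m %/ pdiv m) = m)%N by rewrite mulnC divnK // pdiv_dvd.
have qs : (pdiv m <= m %/ pdiv m)%N.
  apply: pdiv_min_dvd => //; apply/dvdnP; exists (pdiv m); by rewrite qm.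
split => //.
- move: qs sp qm; set q := pdiv m; set s := m %/ q. nia.
- move: sp qm (pdiv_gt0 m); set q := pdiv m; set s := m %/ q. nia.
- apply/negP => pdm; have := num_big_div hs pdm sp; lia.
Qed.

Lemma num_A p m b : (2 < p -> p < m -> p ^ b <= m * p -> m < p * p ->
  p.-1 * m <= (p ^ b).-1 -> b = 2 /\ m = p.+1)%N.
Proof.
move=> p3 pm hb mpp h.
have b3 : (b < 3)%N.
  rewrite -(@ltn_exp2l p) ?(ltn_trans _ p3) //; apply: (leq_ltn_trans hb).
  by rewrite !expnS expn0 muln1 mulnA ltn_pmul2r //; lia.
move: hb h; case: b b3 => [|[|[|]]] // _; rewrite ?expn0 ?expn1 ?expnS ?expn0 ?muln1 /=.
- move=> _ h; exfalso; move: h; case: p p3 pm mpp => [|q] //= ? ? ? ?; nia.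
- move=> _ h; exfalso; move: h; case: p p3 pm mpp => [|q] //= ? ? ? ?; nia.
- move=> _ h; split => //; move: h; case: p p3 pm mpp => [|q] //= ? ? ? ?; nia.
Qed.

Lemma num_B p : (0 < p -> (p * p).-1 = p.-1 * p.+1)%N.
Proof. case: p => [|q] //= _; nia. Qed.

Lemma res_k1' (gT : finGroupType) (G P : {group gT}) p m :
  prime p -> #|P| = p -> P \subset G -> #|G| = (m * p)%N -> 
  (1 < m %/ pdiv m)%N -> (m %/ pdiv m < p)%N -> (p < m)%N ->
  'N_G(P) = P -> 'C_G(P) = P ->
  exists H : {group gT}, H \subset G /\ (#|G| < mCD G H)%N.
Proof.
move=> pr oP sPG oG hs sp pm eN eC.
have [qs mpp mpq qsm npm] := num_facts hs sp pm.
have p1 : (1 < p)%N := prime_gt1 pr.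
have m0 : (0 < m)%N by apply: (leq_ltn_trans (leq0n p) pm).
have pP : p.-group P by rewrite /pgroup oP pnat_id.
have frob : [Frobenius G with complement P].
  apply/andP; split.
    apply/eqP => ePG; move: oG; rewrite -ePG oP => e.
    have : (1 * p < m * p)%N by rewrite ltn_pmul2r ?prime_gt0 //; clear -pm p1; lia.
    by rewrite -e mul1n ltnn.
  apply/normedTI_memJ_P; split => //.
    by rewrite setD_eq0 subG1 -cardG_gt1 oP.
  move=> a g /setD1P[nta Pa] Gg.
  apply/idP/idP => [/setD1P[ntag Pag] | Pg]; last first.
    by rewrite !inE conjg_eq1 nta groupJ.
  have ne : P :&: (P :^ g) != 1.
    apply/trivgPn; exists (a ^ g) => //.
    by rewrite inE Pag memJ_conjg.
  have sP : P \subset P :^ g by apply: prime_meetG; rewrite ?oP.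
  have eP : P :^ g = P.
    by apply/eqP; rewrite eq_sym eqEcard sP cardJg leqnn.
  have : g \in 'N_G(P) by rewrite inE Gg; apply/normP.
  by rewrite eN.
have [K frobK] := vcharacter.Frobenius_kernel_exists frob.
have [defG ntK _ _ _] := Frobenius_context frobK.
have [nsKG _ _ nKP _] := sdprod_context defG.
have oK : #|K| = m.
  have := sdprod_card defG; rewrite oG oP => e.
  by apply/eqP; rewrite -(eqn_pmul2r (prime_gt0 pr)) e.
have cKP : 'C_K(P) = 1 := Frobenius_trivg_cent frobK.
have fix1 : forall L : {group gT}, L \subset K -> P \subset 'N(L) -> (#|L| %% p = 1)%N.
  move=> L sLK nLP.
  have actLP : [acts P, on L | 'J] by rewrite astabsJ.
  have := pgroup_fix_mod pP actLP.
  have -> : 'Fix_(L | 'J)(P) = 1.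
    have -> : 'Fix_(L | 'J)(P) = 'C_L(P) by rewrite afixJ.
    apply/trivgP; rewrite -cKP; exact: setSI.
  by rewrite cards1 => ->; rewrite modn_small.
have coKP : coprime #|K| #|P| by rewrite oK oP coprime_sym prime_coprime.
have [R sylR nRP] := sol_coprime_Sylow_exists (pdiv m) (pgroup_sol pP) nKP coKP.
have sRK := pHall_sub sylR.
have oR : #|R| = m.
  apply: (@num_mod1 p m #|R| hs sp).
  - by rewrite -oK cardSg.
  - exact: fix1.
  - by rewrite (card_Hall sylR) oK p_part_gt1 pi_pdiv; clear -pm p1; lia.
have eRK : R :=: K by apply/eqP; rewrite eqEcard sRK oR oK leqnn.
have qK : (pdiv m).-group K by rewrite -eRK; exact: pHall_pgroup sylR.
have ntZK : 'Z(K) != 1 by rewrite center_nil_eq1 ?(pgroup_nil qK).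
have nZP : P \subset 'N('Z(K)) := subset_trans nKP (char_norms (center_char K)).
have oZK : #|'Z(K)| = m.
  apply: (@num_mod1 p m #|'Z(K)| hs sp).
  - by rewrite -oK cardSg // center_sub.
  - apply: fix1 => //; exact: center_sub.
  - by rewrite cardG_gt1.
have cKK : K \subset 'C(K).
  have eZ : 'Z(K) = K :> {set gT}.
    by apply/eqP; rewrite eqEcard center_sub oZK oK leqnn.
  by rewrite -{1}eZ subsetIr.
have sKG : K \subset G := normal_sub nsKG.
exists K; split => //; rewrite /mCD oG oK.
have : (m <= #|'C_G(K)|)%N by rewrite -oK subset_leq_card // subsetI sKG cKK.
move=> h; apply: (@leq_trans (m * m)); last by rewrite leq_mul2l h orbT.
by rewrite ltn_pmul2l.
Qed.

Lemma res_k2' (gT : finGroupType) (G P Q : {group gT}) p k m :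
  prime p -> (2 <= k)%N -> #|G| = (m * p ^ k)%N -> p.-Sylow(G) P -> p.-Sylow(G) Q ->
  #|P| = (p ^ k)%N -> Q != P -> #|'Z(P)| = p ->
  (1 < m %/ pdiv m)%N -> (m %/ pdiv m < p)%N -> (p < m)%N ->
  'N_G('Z(P)) \subset P ->
  exists H : {group gT}, H \subset G /\ (#|G| < mCD G H)%N.
Proof.
move=> pr k2 oG sylP sylQ oP nQP oZ hs sp pm sNZ.
have [qs mpp mpq qsm npm] := num_facts hs sp pm.
have p1 : (1 < p)%N := prime_gt1 pr.
have p0 : (0 < p)%N := prime_gt0 pr.
have m0 : (0 < m)%N by apply: (leq_ltn_trans (leq0n p) pm).
have sPG := pHall_sub sylP; have sQG := pHall_sub sylQ.
have pP := pHall_pgroup sylP; have pQ := pHall_pgroup sylQ.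
have oQ : #|Q| = (p ^ k)%N by rewrite (card_Hall sylQ) -(card_Hall sylP).
have iP : #|G : P| = m.
  by rewrite -(divgS sPG) oG oP mulnK // expn_gt0 p0.
set D := (P :&: Q)%G.
have sDP : D \subset P := subsetIl _ _.
have sDQ : D \subset Q := subsetIr _ _.
have [d oD] := p_natP (pgroupS sDP pP).
have hD : (p ^ k <= m * p ^ d)%N.
  have := mul_cardG P Q; rewrite oP oQ => e.
  change #|P :&: Q| with #|gval D| in e; rewrite oD in e.
  have : (#|(P * Q)%g| <= #|G|)%N by apply: subset_leq_card; apply: mul_subG.
  rewrite oG => h.
  have : (p ^ k * p ^ k <= m * p ^ k * p ^ d)%N by rewrite e leq_mul2r h orbT.
  by rewrite mulnAC leq_pmul2r // expn_gt0 p0.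
have dk : (d < k)%N.
  rewrite ltn_neqAle; apply/andP; split.
    apply: contra nQP => /eqP edk.
    have eDP : D :=: P by apply/eqP; rewrite eqEcard sDP oD oP edk leqnn.
    have eDQ : D :=: Q by apply/eqP; rewrite eqEcard sDQ oD oQ edk leqnn.
    by apply/eqP; apply: val_inj; rewrite /= -eDQ eDP.
  by rewrite -(leq_exp2l _ _ p1) -oD -oP subset_leq_card.
have ed : d = k.-1.
  have : (p ^ k < p ^ d.+2)%N.
    apply: (leq_ltn_trans hD); rewrite !expnS mulnA ltn_pmul2r ?expn_gt0 ?p0 //.
  rewrite ltn_exp2l //; clear -dk; lia.
have pk1 : (p ^ k = p ^ k.-1 * p)%N by rewrite -expnSr prednK //; clear -k2; lia.
have iDP : #|P : D| = p.
  have := Lagrange sDP; rewrite oD oP ed pk1 => e.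
  have pk0 : (0 < p ^ k.-1)%N by rewrite expn_gt0 p0.
  by apply/eqP; rewrite -(eqn_pmul2l pk0) e.
have iDQ : #|Q : D| = p.
  have := Lagrange sDQ; rewrite oD oQ ed pk1 => e.
  have pk0 : (0 < p ^ k.-1)%N by rewrite expn_gt0 p0.
  by apply/eqP; rewrite -(eqn_pmul2l pk0) e.
have nDP : D <| P by apply: (p_maximal_normal pP); apply: p_index_maximal; rewrite ?iDP.
have nDQ : D <| Q by apply: (p_maximal_normal pQ); apply: p_index_maximal; rewrite ?iDQ.
set N := 'N_G(D).
have sNG : N \subset G := subsetIl _ _.
have sPN : P \subset N by rewrite subsetI sPG normal_norm.
have sQN : Q \subset N by rewrite subsetI sQG normal_norm.
have sylPN : p.-Sylow(N) P := pHall_subl sPN sNG sylP.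
have sylQN : p.-Sylow(N) Q := pHall_subl sQN sNG sylQ.
have sNNN : 'N_N(P) \subset N := subsetIl _ _.
have sPNN : P \subset 'N_N(P) by rewrite subsetI sPN normG.
have eIdx : (#|G : N| * (#|N : 'N_N(P)| * #|'N_N(P) : P|) = m)%N.
  by rewrite (Lagrange_index sNNN sPNN) (Lagrange_index sNG sPN).
have nS : #|'Syl_p(N)| = m.
  apply: (@num_mod1 p m _ hs sp).
  - by rewrite (card_Syl sylPN) -eIdx dvdn_mull // dvdn_mulr.
  - exact: card_Syl_mod.
  - have : [set P; Q] \subset 'Syl_p(N).
      by apply/subsetP => X; rewrite !inE => /orP[] /eqP ->; rewrite ?sylPN ?sylQN.
    move/subset_leq_card; rewrite cards2 eq_sym nQP; done.
have GN : G \subset 'N(D).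
  have : #|G : N| == 1%N.
    move: eIdx; rewrite -(card_Syl sylPN) nS => e.
    have := indexg_gt0 G N; have := indexg_gt0 'N_N(P) P.
    move: e; set a := #|G : N|; set b := #|_ : P|; move=> e h1 h2.
    have : (m * (a * b) == m * 1)%N by rewrite muln1 mulnCA e.
    by rewrite eqn_pmul2l // muln_eq1 => /andP[/eqP -> _].
  by rewrite indexg_eq1 => /subsetIP[].
have nDG : D <| G by rewrite /normal (subset_trans sDP sPG) GN.
have ntD : D :!=: 1.
  rewrite -cardG_gt1 oD ed; rewrite -(expn0 p) ltn_exp2l //; clear -k2; lia.
have ZD : 'Z(P) \subset D.
  apply: prime_meetG; first by rewrite oZ.
  by rewrite setIC; apply: meet_center_nil => //; exact: pgroup_nil pP.
set A := 'Z(D).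
have nAG : A <| G := char_normal_trans (center_char D) nDG.
have sZA : 'Z(P) \subset A.
  rewrite subsetI ZD /=; apply: subset_trans (centS sDP); exact: subsetIr.
have sDC : D \subset 'C_G(A).
  by rewrite subsetI (subset_trans sDP sPG) centsC subsetIr.
have pA : p.-group A := pgroupS (subset_trans (center_sub D) sDP) pP.
case: (leqP #|A| (m * p)) => hA; last first.
  exists [group of A]; split; first exact: normal_sub nAG.
  rewrite /mCD /= oG.
  have : (p ^ k.-1 <= #|'C_G(A)|)%N by rewrite -ed -oD subset_leq_card.
  move=> h; apply: (@leq_trans (#|A| * p ^ k.-1)); last by rewrite leq_mul2l h orbT.
  by rewrite pk1 mulnA mulnAC ltn_pmul2r // expn_gt0 p0.
exfalso.
set Z := 'Z(P).
have p3 : (2 < p)%N by clear -hs sp; lia.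
have nZP : P \subset 'N(Z) := normal_norm (center_normal P).
have nAG' : G \subset 'N(A) := normal_norm nAG.
have sAG : A \subset G := normal_sub nAG.
have nTI : normedTI Z^# G P.
  apply/normedTI_memJ_P; split => //.
    by rewrite setD_eq0 subG1 -cardG_gt1 oZ.
  move=> a g /setD1P[nta Za] Gg.
  apply/idP/idP => [/setD1P[ntag Zag] | Pg]; last first.
    have nZg : g \in 'N(Z) := subsetP nZP g Pg.
    by rewrite in_setD1 conjg_eq1 nta memJ_norm.
  have ne : Z :&: (Z :^ g) != 1.
    apply/trivgPn; exists (a ^ g) => //.
    by rewrite inE Zag memJ_conjg.
  have sZ : Z \subset Z :^ g by apply: prime_meetG; rewrite ?oZ.
  have eZ : Z :^ g = Z.
    by apply/eqP; rewrite eq_sym eqEcard sZ cardJg leqnn.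
  have : g \in 'N_G(Z) by rewrite inE Gg; apply/normP.
  by move/(subsetP sNZ).
have memJ := normedTI_memJ_P nTI.
case: memJ => _ _ memJ.
have oZ1 : #|Z^#| = p.-1 by rewrite -oZ (cardsD1 1 Z) group1.
have cs : #|class_support Z^# G| = (p.-1 * m)%N.
  by rewrite (card_support_normedTI nTI) oZ1 iP.
have sCA : class_support Z^# G \subset A^#.
  apply/subsetP => x; rewrite class_supportEr => /bigcupP[g Gg].
  rewrite mem_conjg => /setD1P[ntx Zx].
  rewrite in_setD1 -(conjg_eq1 x g^-1) ntx /=.
  rewrite -(memJ_norm x (subsetP nAG' _ (groupVr Gg))).
  exact: (subsetP sZA).
have oA1 : #|A^#| = #|A|.-1 by rewrite (cardsD1 1 A) group1.
have hcard : (p.-1 * m <= #|A|.-1)%N by rewrite -cs -oA1 subset_leq_card.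
have [b oA] := p_natP pA.
have hb : (p ^ b <= m * p)%N by rewrite -oA.
have hc' : (p.-1 * m <= (p ^ b).-1)%N by rewrite -oA.
have [eb em] := num_A p3 pm hb mpp hc'.
have eCA : class_support Z^# G = A^#.
  apply/eqP; rewrite eqEcard sCA /= cs oA1 oA eb em.
  by rewrite expnS expn1 (num_B p0).
have odp : odd p.
  by case: (even_prime pr) => // e2; rewrite e2 in p3.
have d2 : (2 %| #|G|)%N.
  by rewrite oG em dvdn_mulr // dvdn2 /= negbK.
have [y Gy oy] := Cauchy (isT : prime 2) d2.
have noP : forall h, h \in P -> #[h] = 2%N -> False.
  move=> h Ph oh; have := order_dvdG Ph; rewrite oh oP Euclid_dvdX //.
  rewrite dvdn_prime2 // => /andP[/eqP e2 _]; by rewrite -e2 in p3.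
have y2 : (y * y = 1)%g by rewrite -expg2 -oy expg_order.
case: (boolP [exists a, (a \in A^#) && (a ^ y == a)]).
  case/existsP => a /andP[]; rewrite -eCA class_supportEr => /bigcupP[g Gg].
  rewrite mem_conjg => Zb /eqP ay.
  apply: (noP (y ^ g^-1)); last by rewrite orderJ.
  rewrite -(memJ (a ^ g^-1)) //; last by rewrite groupJ ?groupV.
  by rewrite -conjJg ay.
move/existsPn => nofix.
have [z Zz] : exists z, z \in Z^#.
  apply/set0Pn; by rewrite setD_eq0 subG1 -cardG_gt1 oZ.
have zA : z \in A by apply: (subsetP sZA); case/setD1P: Zz.
have zyA : z ^ y \in A by rewrite memJ_norm // (subsetP nAG').
set c := (z * z ^ y)%g.
have cA : c \in A by rewrite groupM.
have cyc : c ^ y = c.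
  rewrite /c conjMg -conjgM y2 conjg1.
  have cAA := center_abelian D.
  by rewrite (centP (subsetP cAA _ zA) _ zyA).
have c1 : c = 1%g.
  apply/eqP; apply: contraNT (nofix c) => nc.
  by rewrite in_setD1 nc cA cyc eqxx.
have zy : z ^ y = z^-1.
  by apply/esym; apply: mulg1_eq.
apply: (noP y) => //.
rewrite -(memJ z) // zy in_setD1 invg_eq1 groupV.
by case/setD1P: Zz => -> ->.
Qed.

Lemma main_exists (gT : finGroupType) (G : {group gT}) (p k m : nat) :
  prime p -> (1 <= k)%N -> #|G| = (m * p ^ k)%N ->
  (1 < m %/ pdiv m)%N -> (m %/ pdiv m < p)%N -> (p < m)%N ->
  exists H : {group gT}, H \subset G /\ (#|G| < mCD G H)%N.
Proof.
move=> pr k1 oG hs sp pm.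
have [qs mpp mpq qsm npm] := num_facts hs sp pm.
have p1 : (1 < p)%N := prime_gt1 pr.
have m0 : (0 < m)%N by apply: (leq_ltn_trans (leq0n p) pm).
have [P sylP] := Sylow_exists p G.
have sPG : P \subset G := pHall_sub sylP.
have pP : p.-group P := pHall_pgroup sylP.
have oP : #|P| = (p ^ k)%N.
  have pk0 : (0 < p ^ k)%N by rewrite expn_gt0 prime_gt0.
  rewrite (card_Hall sylP) oG p_part lognM //.
  have cpm : coprime p m by rewrite prime_coprime.
  by rewrite (logn_coprime cpm) pfactorK.
have iP : #|G : P| = m.
  by rewrite -(divgS sPG) oG oP mulnK // expn_gt0 prime_gt0.
set Z := 'Z(P).
have ntP : P :!=: 1.
  rewrite -cardG_gt1 oP; apply: (leq_trans p1).
  by rewrite -{1}(expn1 p) (leq_pexp2l (prime_gt0 pr)).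
have ntZ : Z :!=: 1 by rewrite /Z center_nil_eq1 // (pgroup_nil pP).
have pZ : p.-group Z := pgroupS (center_sub P) pP.
have sPC : P \subset 'C_G(Z) by rewrite subsetI sPG centsC subsetIr.
have sZG : Z \subset G := subset_trans (center_sub P) sPG.
have cP : (#|P| <= #|'C_G(Z)|)%N := subset_leq_card sPC.
have [a oZ] := p_natP pZ.
have a1 : (1 <= a)%N.
  case: a oZ => // oZ; by rewrite -cardG_gt1 oZ in ntZ.
case: (leqP 2 a) => a2.
  exists [group of Z]; split => //; rewrite /mCD /= oZ oG.
  apply: (@leq_trans (p ^ 2 * p ^ k)); last first.
    apply: leq_mul; first by rewrite (leq_pexp2l (prime_gt0 pr)).
    by rewrite -oP.
  by rewrite ltn_pmul2r ?expn_gt0 ?prime_gt0 // expnS expn1.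
have {a1 a2} oZp : #|Z| = p by rewrite oZ; have -> : a = 1%N by clear -a1 a2; lia.
set C := 'C_G(Z).
have tC : (#|P| * #|C : P| = #|C|)%N := Lagrange sPC.
have sCG : C \subset G := subsetIl _ _.
have tdm : (#|C : P| %| m)%N.
  by rewrite -iP -(Lagrange_index sCG sPC) dvdn_mull.
have t0 : (0 < #|C : P|)%N by apply: indexg_gt0.
case: (leqP 2 #|C : P|) => t2.
  exists [group of Z]; split => //; rewrite /mCD /= oZp -tC oP oG.
  have : (pdiv m <= #|C : P|)%N by apply: pdiv_min_dvd.
  move=> h; apply: (@leq_trans (p * (p ^ k * pdiv m))); last first.
    by rewrite leq_mul2l leq_mul2l h !orbT.
  rewrite mulnCA (mulnC m) ltn_pmul2l //.
  by rewrite expn_gt0 prime_gt0.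
have eC : C = P.
  apply/eqP; rewrite eq_sym eqEcard sPC -tC.
  have -> : #|C : P| = 1%N by clear -t0 t2; lia.
  by rewrite muln1 leqnn.
have nZN : 'N(P) \subset 'N(Z) := char_norms (center_char P).
case: (boolP (G \subset 'N(P))) => nPG.
  exfalso.
  have sGN : G \subset 'N(Z) := subset_trans nPG nZN.
  have h := cardSg (Aut_conj_aut [group of Z] G).
  rewrite card_Aut_cyclic ?prime_cyclic ?oZp // totient_prime // in h.
  rewrite card_morphim ker_conj_aut /= (setIidPr sGN) -indexgI in h.
  rewrite -/C eC iP in h.
  have p10 : (0 < p.-1)%N by rewrite -subn1 subn_gt0.
  have h' := dvdn_leq p10 h.
  by have := leq_ltn_trans h' (leq_ltn_trans (leq_pred p) pm); rewrite ltnn.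
have nP : #|'Syl_p(G)| = m.
  apply: (@num_mod1 p m #|'Syl_p(G)| hs sp).
  - have sPN : P \subset 'N_G(P) by rewrite subsetI sPG normG.
    rewrite (card_Syl sylP) -iP -(Lagrange_index (subsetIl G 'N(P)) sPN).
    exact: dvdn_mulr (dvdnn _).
  - exact: card_Syl_mod.
  - rewrite (card_Syl sylP) ltnNge; apply: contra nPG => h.
    have : #|G : 'N_G(P)| == 1%N by rewrite eqn_leq h indexg_gt0.
    by rewrite indexg_eq1 => /subsetIP[].
have sPN : P \subset 'N_G(P) by rewrite subsetI sPG normG.
have eN : 'N_G(P) = P.
  apply/eqP; rewrite eqEsubset sPN andbT -indexg_eq1.
  have := Lagrange_index (subsetIl G 'N(P)) sPN.
  rewrite -(card_Syl sylP) nP iP => e.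
  apply/eqP; apply/eqP; rewrite -(eqn_pmul2l m0) muln1; apply/eqP; exact: e.
have sNZ : 'N_G(Z) \subset P.
  have nC : 'N_G(Z) \subset 'N(C).
    apply: normsI; first exact: subset_trans (subsetIl G _) (normG G).
    exact: subset_trans (subsetIr G _) (cent_norm Z).
  rewrite eC in nC.
  by rewrite -eN subsetI subsetIl nC.
have [Q sylQ nQP] : exists2 Q : {group gT}, p.-Sylow(G) Q & Q != P.
  have PS : P \in 'Syl_p(G) by rewrite inE sylP.
  move: nP; rewrite (cardsD1 P) PS add1n => nP'.
  have : (0 < #|'Syl_p(G) :\ P|)%N by clear -nP' pm p1; lia.
  case/card_gt0P => Q /setD1P[nQP]; rewrite inE => sylQ.
  by exists Q.
case: (leqP 2 k) => k2.
  exact: (res_k2' pr k2 oG sylP sylQ oP nQP oZp hs sp pm sNZ).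
have k1' : k = 1%N by clear -k1 k2; lia.
apply: (res_k1' (P := P) pr).
- by rewrite oP k1' expn1.
- done.
- by rewrite oG k1' expn1.
- done.
- done.
- done.
- done.
- have eZP : Z = P.
    apply/eqP; rewrite eqEcard center_sub oZp oP k1' expn1 leqnn.
    done.
  by rewrite -eZP -/C eC.
Qed.

Theorem theorem2 (gT : finGroupType) (G : {group gT}) (p k m : nat) :
  prime p -> (1 <= k)%N -> #|G| = (m * p ^ k)%N ->
  (1 < m %/ pdiv m)%N -> (m %/ pdiv m < p)%N -> (p < m)%N ->
  (#|G| < mstar G)%N /\ ~ CD_simple G.
Proof.
move=> pr k1 oG hs sp pm.
have [H [sHG lt]] := main_exists pr k1 oG hs sp pm.
have le : (mCD G H <= mstar G)%N.
  by rewrite /mstar; apply: (leq_bigmax_cond H).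
have ltG := leq_trans lt le.
split => // cds.
have : (1%G : {group gT}) \in CDlattice G by rewrite cds !inE eqxx.
rewrite inE => /andP[_ /eqP e].
move: e; rewrite /mCD cards1 mul1n cent1T setIT => e.
by rewrite e ltnn in ltG.
Qed.
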